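(* Under the setting and assumptions of the previous statement (symmetric positive definite $A_1,A_2$ with spectra in $[\alpha_1,\beta_1]$, $[\alpha_2,\beta_2]$; level-$h$ block-diagonal parts $A_i^{(h)}$, $h=0,\dots,\ell$; matrices $\widetilde X^{(\ell)},\delta\widetilde X^{(h)}$ with $\|R^{(\ell)}\|_F\le\epsilon\|B\|_F$ and $\|R^{(h)}\|_F\le\epsilon\|\widetilde\Xi^{(h)}\|_F$), with $\kappa=\frac{\beta_1+\beta_2}{\alpha_1+\alpha_2}$ and the additional constraint $\kappa\epsilon<\frac{2}{\ell}$, the matrix $\widetilde X:=\widetilde X^{(0)}=\widetilde X^{(\ell)}+\delta\widetilde X^{(\ell-1)}+\dots+\delta\widetilde X^{(0)}$ satisfies $$\|A_1\widetilde X+\widetilde XA_2-B\|_F\le(\ell+1)^2\kappa\epsilon\|B\|_F.$$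
   Context: For $i=1,2$, fix nested partitions of $\{1,\dots,n_i\}$ into contiguous index sets at levels $h=0,\dots,\ell$ (level $0$ trivial, each level obtained by splitting each set of the previous level into two contiguous parts). $A_i^{(h)}$ is the block-diagonal matrix keeping the entries of $A_i$ with row and column indices in the same level-$h$ set (so $A_i^{(0)}=A_i$). Given $B\in\mathbb R^{n_1\times n_2}$ and matrices $\widetilde X^{(\ell)}$, $\delta\widetilde X^{(h)}$ ($h=\ell-1,\dots,0$): $R^{(\ell)}:=A_1^{(\ell)}\widetilde X^{(\ell)}+\widetilde X^{(\ell)}A_2^{(\ell)}-B$; $\widetilde X^{(h+1)}:=\widetilde X^{(\ell)}+\delta\widetilde X^{(\ell-1)}+\dots+\delta\widetilde X^{(h+1)}$; $\widetilde\Xi^{(h)}:=-(A_1^{(h)}-A_1^{(h+1)})\widetilde X^{(h+1)}-\widetilde X^{(h+1)}(A_2^{(h)}-A_2^{(h+1)})$; $R^{(h)}:=A_1^{(h)}\delta\widetilde X^{(h)}+\delta\widetilde X^{(h)}A_2^{(h)}-\widetilde\Xi^{(h)}$. $\|\cdot\|_F$ is the Frobenius norm. *)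

(* Defs.v *)
From HB Require Import structures.
From mathcomp Require Import all_boot all_order all_algebra.
Set Implicit Arguments. Unset Strict Implicit. Unset Printing Implicit Defensive.
Import Order.TTheory GRing.Theory Num.Theory.
Local Open Scope ring_scope.

Definition frob (R : rcfType) (m n : nat) (A : 'M[R]_(m, n)) : R :=
  Num.sqrt (\sum_(i < m) \sum_(j < n) A i j ^+ 2).

Definition spd (R : rcfType) (n : nat) (A : 'M[R]_n) : Prop :=
  A^T = A /\ forall v : 'cV[R]_n, v != 0 -> 0 < (v^T *m A *m v) 0 0.

Definition spectrum_in (R : rcfType) (n : nat) (A : 'M[R]_n) (a b : R) : Prop :=
  forall x : R, eigenvalue A x -> a <= x <= b.

(* Nested partitions of {0,..,n-1} into contiguous index sets, levels 0..l.
   s h i j  means "i and j lie in the same level-h set". *)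
Definition nested_partition (n l : nat) (s : nat -> 'I_n -> 'I_n -> bool) : Prop :=
  [/\
      (forall h, (h <= l)%N ->
         [/\ (forall i, s h i i),
             (forall i j, s h i j -> s h j i) &
             (forall i j k, s h i j -> s h j k -> s h i k)]),
      (forall i j, s 0%N i j),
      (forall h, (h <= l)%N -> forall i j k : 'I_n,
          (i <= j)%N -> (j <= k)%N -> s h i k -> s h i j) &
      (* each level-h set is split into exactly two (nonempty) level-(h+1) sets *)
      (forall h, (h < l)%N ->
          [/\ (forall i j, s h.+1 i j -> s h i j),
              (forall i, exists j, s h i j && ~~ s h.+1 i j) &
              (forall i j k, s h i j -> s h i k ->
                  [|| s h.+1 i j, s h.+1 i k | s h.+1 j k])])].

Definition blockpart (R : rcfType) (n : nat) (s : nat -> 'I_n -> 'I_n -> bool)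
  (h : nat) (A : 'M[R]_n) : 'M[R]_n :=
  \matrix_(i, j) (if s h i j then A i j else 0).

Section Iter.
Variables (R : rcfType) (n1 n2 l : nat).
Variables (s1 : nat -> 'I_n1 -> 'I_n1 -> bool) (s2 : nat -> 'I_n2 -> 'I_n2 -> bool).
Variables (A1 : 'M[R]_n1) (A2 : 'M[R]_n2) (Xl : 'M[R]_(n1, n2)) (dX : nat -> 'M[R]_(n1, n2)).

Definition Xt (h : nat) : 'M[R]_(n1, n2) := Xl + \sum_(h <= k < l) dX k.

Definition Xi (h : nat) : 'M[R]_(n1, n2) :=
  - ((blockpart s1 h A1 - blockpart s1 h.+1 A1) *m Xt h.+1)
  - Xt h.+1 *m (blockpart s2 h A2 - blockpart s2 h.+1 A2).

Definition Rl : 'M[R]_(n1, n2) :=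
  blockpart s1 l A1 *m Xl + Xl *m blockpart s2 l A2.

Definition Rh (h : nat) : 'M[R]_(n1, n2) :=
  blockpart s1 h A1 *m dX h + dX h *m blockpart s2 h A2 - Xi h.
End Iter.

(* Main.v *)
Require Import Defs.
From HB Require Import structures.
From mathcomp Require Import all_boot all_order all_algebra.
From mathcomp Require Import complex spectral sesquilinear.
From mathcomp Require Import ring lra.
Import Order.TTheory GRing.Theory Num.Theory.
Set Implicit Arguments. Unset Strict Implicit. Unset Printing Implicit Defensive.
Local Open Scope ring_scope.

Definition ip (R : rcfType) m n (X Y : 'M[R]_(m, n)) : R :=
  \sum_(i < m) \sum_(j < n) X i j * Y i j.

Lemma ipE (R : comPzRingType) m n (X Y : 'M[R]_(m, n)) :
  \sum_(i < m) \sum_(j < n) X i j * Y i j = \tr (X^T *m Y).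
Proof.
rewrite /mxtrace exchange_big; apply: eq_bigr => j _; rewrite !mxE.
by apply: eq_bigr => i _; rewrite !mxE.
Qed.

Section Spec.
Variable R : rcfType.
Local Notation C := (R[i]).
Local Notation toC := (real_complex R).

Lemma eig_transfer n (A : 'M[R]_n) x :
  eigenvalue (map_mx toC A) (toC x) = eigenvalue A x.
Proof. by rewrite !eigenvalue_root_char -map_char_poly fmorph_root. Qed.

Lemma spec_diag_eig n (M : 'M[C]_n) (P : 'M[C]_n) d k :
  P \in unitmx -> M = invmx P *m diag_mx d *m P -> eigenvalue M (d 0 k).
Proof.
move=> Pu HM; apply/eigenvalueP; exists (row k P).
  have -> : row k P *m M = row k (P *m M) by rewrite row_mul.
  rewrite HM !mulmxA mulmxV // mul1mx mul_diag_mx.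
  by apply/rowP=> j; rewrite !mxE.
apply/negP => /eqP h0.
have : row k P *m invmx P = 0 by rewrite h0 mul0mx.
rewrite rowE mulmxK // => /matrixP /(_ 0 k); rewrite !mxE !eqxx /=.
by move/eqP; rewrite oner_eq0.
Qed.

End Spec.

Section Spec2.
Variable R : rcfType.
Local Notation C := (R[i]).
Local Notation toC := (real_complex R).

Lemma toC_real (x : R) : ((toC x)^*)%R = toC x.
Proof. by apply: conj_Creal; apply/complex_realP; exists x. Qed.

Lemma toC_tr n (M : 'M[R]_n) : toC (\tr M) = \tr (map_mx toC M).
Proof. by rewrite /mxtrace rmorph_sum; apply: eq_bigr => i _; rewrite mxE. Qed.

Lemma trC_form n m (Y W : 'M[C]_(n, m)) :
  \tr (map_mx Num.conj Y^T *m W) = \sum_(i < n) \sum_(j < m) (Y i j)^* * W i j.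
Proof.
rewrite -map_trmx -ipE; apply: eq_bigr => i _; apply: eq_bigr => j _.
by rewrite !mxE.
Qed.

Lemma quad_bnd n m (P : 'M[C]_n) (d : 'rV[C]_n) (Z : 'M[C]_(n, m)) c :
  P \is unitarymx ->
  ((forall k, c <= d 0 k) ->
   c * \tr (map_mx Num.conj Z^T *m Z) <=
   \tr (map_mx Num.conj Z^T *m (map_mx Num.conj P^T *m diag_mx d *m P *m Z))) /\
  ((forall k, d 0 k <= c) ->
   \tr (map_mx Num.conj Z^T *m (map_mx Num.conj P^T *m diag_mx d *m P *m Z))
   <= c * \tr (map_mx Num.conj Z^T *m Z)).
Proof.
move=> Pu.
have PtP : map_mx Num.conj P^T *m P = 1%:M.
  by apply: mulmx1C; apply/unitarymxP.
have e0 : map_mx Num.conj Z^T *m Z = map_mx Num.conj (P *m Z)^T *m (P *m Z).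
  by rewrite trmx_mul map_mxM !mulmxA -[_ *m _ *m P]mulmxA PtP mulmx1.
have e1 : map_mx Num.conj Z^T *m (map_mx Num.conj P^T *m diag_mx d *m P *m Z)
   = map_mx Num.conj (P *m Z)^T *m (diag_mx d *m (P *m Z)).
  by rewrite trmx_mul map_mxM !mulmxA.
rewrite e0 e1; move: (P *m Z) => Y.
split=> Hc; rewrite !trC_form mulr_sumr; apply: ler_sum => i _;
  rewrite mulr_sumr; apply: ler_sum => j _; rewrite mul_diag_mx mxE (mulrCA _ (d 0 i));
  (apply: ler_wpM2r; [by rewrite mulrC mul_conjC_ge0 | by apply: Hc]).
Qed.

Lemma ray_spec n (A : 'M[R]_n) a b : A^T = A ->
  (forall x, eigenvalue A x -> a <= x <= b) ->
  forall m (X : 'M[R]_(n, m)), a * ip X X <= ip X (A *m X) <= b * ip X X.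
Proof.
move=> Asym Hsp m X.
have herm : map_mx toC A \is hermsymmx.
  apply/is_hermitianmxP; rewrite expr0 scale1r; apply/matrixP => i j.
  rewrite !mxE toC_real; congr toC.
  by rewrite -{1}Asym mxE.
have /orthomx_spectralP HA := hermitian_normalmx herm.
move: HA (spectral_unitarymx (map_mx toC A)) (hermitian_spectral_diag_real herm).
move: (spectralmx _) (spectral_diag _) => P d HA Pu dreal.
have dbnd : forall k, toC a <= d 0 k <= toC b.
  move=> k; have dk : d 0 k \is Num.real by exact: (mxOverP dreal).
  have ev : eigenvalue A (complex.Re (d 0 k)).
    rewrite -eig_transfer RRe_real //.
    exact: (spec_diag_eig k (unitarymx_unit Pu) HA).
  by rewrite -(RRe_real dk) !lecR; apply: Hsp.
have ipC : forall (Y Z : 'M[R]_(n, m)), toC (ip Y Z) =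
   \tr (map_mx Num.conj (map_mx toC Y)^T *m map_mx toC Z).
  move=> Y Z; rewrite /ip ipE toC_tr map_mxM map_trmx; congr (\tr (_ *m _)).
  by apply/matrixP => i j; rewrite !mxE toC_real.
have T1 : toC (ip X (A *m X)) = \tr (map_mx Num.conj (map_mx toC X)^T *m
     (map_mx Num.conj P^T *m diag_mx d *m P *m map_mx toC X)).
  by rewrite ipC [map_mx toC (A *m X)]map_mxM HA (invmx_unitary Pu).
have [lo hi] := quad_bnd d (map_mx toC X) (toC a) Pu.
have [lo' hi'] := quad_bnd d (map_mx toC X) (toC b) Pu.
apply/andP; split; rewrite -lecR rmorphM /= T1 ipC.
  by apply: lo => k; case/andP: (dbnd k).
by apply: hi' => k; case/andP: (dbnd k).
Qed.
End Spec2.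

Section IP.
Variable R : rcfType.

Lemma ipC m n (X Y : 'M[R]_(m, n)) : ip X Y = ip Y X.
Proof. by apply: eq_bigr => i _; apply: eq_bigr => j _; rewrite mulrC. Qed.

Lemma ipDr m n (X Y Z : 'M[R]_(m, n)) : ip X (Y + Z) = ip X Y + ip X Z.
Proof.
rewrite /ip -big_split; apply: eq_bigr => i _; rewrite -big_split.
by apply: eq_bigr => j _; rewrite mxE mulrDr.
Qed.

Lemma ipZr m n (X Y : 'M[R]_(m, n)) c : ip X (c *: Y) = c * ip X Y.
Proof.
rewrite /ip mulr_sumr; apply: eq_bigr => i _; rewrite mulr_sumr.
by apply: eq_bigr => j _; rewrite mxE mulrCA.
Qed.

Lemma ipNr m n (X Y : 'M[R]_(m, n)) : ip X (- Y) = - ip X Y.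
Proof. by rewrite -scaleN1r ipZr mulN1r. Qed.

Lemma ipBr m n (X Y Z : 'M[R]_(m, n)) : ip X (Y - Z) = ip X Y - ip X Z.
Proof. by rewrite ipDr ipNr. Qed.

Lemma ipDl m n (X Y Z : 'M[R]_(m, n)) : ip (Y + Z) X = ip Y X + ip Z X.
Proof. by rewrite ipC ipDr ![ip X _]ipC. Qed.

Lemma ipBl m n (X Y Z : 'M[R]_(m, n)) : ip (Y - Z) X = ip Y X - ip Z X.
Proof. by rewrite ipC ipBr ![ip X _]ipC. Qed.

Lemma ipZl m n (X Y : 'M[R]_(m, n)) c : ip (c *: Y) X = c * ip Y X.
Proof. by rewrite ipC ipZr ipC. Qed.

Lemma ipNl m n (X Y : 'M[R]_(m, n)) : ip (- Y) X = - ip Y X.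
Proof. by rewrite ipC ipNr ipC. Qed.

Lemma ip_tr m n (X Y : 'M[R]_(m, n)) : ip X Y = ip X^T Y^T.
Proof.
rewrite /ip exchange_big; apply: eq_bigr => i _; apply: eq_bigr => j _.
by rewrite !mxE.
Qed.

Lemma ip_mull m n (M : 'M[R]_m) (X Y : 'M[R]_(m, n)) :
  ip X (M *m Y) = ip (M^T *m X) Y.
Proof. by rewrite /ip !ipE trmx_mul trmxK mulmxA. Qed.

Lemma ip_ge0 m n (X : 'M[R]_(m, n)) : 0 <= ip X X.
Proof. by apply: sumr_ge0 => i _; apply: sumr_ge0 => j _; rewrite -expr2 sqr_ge0. Qed.

Lemma ip_eq0 m n (X : 'M[R]_(m, n)) : ip X X = 0 -> X = 0.
Proof.
move=> /eqP; rewrite psumr_eq0; last first.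
  by move=> i _; apply: sumr_ge0 => j _; rewrite -expr2 sqr_ge0.
move/allP => H; apply/matrixP => i j; rewrite mxE.
have := H i (mem_index_enum _); rewrite implyTb psumr_eq0; last first.
  by move=> k _; rewrite -expr2 sqr_ge0.
move/allP/(_ j (mem_index_enum _)); rewrite implyTb -expr2 sqrf_eq0.
by move/eqP.
Qed.

Lemma ip_CS m n (X Y : 'M[R]_(m, n)) : ip X Y ^+ 2 <= ip X X * ip Y Y.
Proof.
have [Y0|] := eqVneq (ip Y Y) 0.
  have ip0 : forall Z : 'M[R]_(m, n), ip Z 0 = 0.
    by move=> Z; rewrite /ip big1 // => i _; rewrite big1 // => j _; rewrite mxE mulr0.
  by rewrite (ip_eq0 Y0) !ip0 expr0n /= mulr0.
move=> nz; have pos : 0 < ip Y Y by rewrite lt_def nz ip_ge0.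
have := ip_ge0 (ip Y Y *: X - ip X Y *: Y).
rewrite !(ipBl, ipBr, ipZl, ipZr) [ip Y X]ipC => H.
have H2 : 0 <= ip Y Y * (ip X X * ip Y Y - ip X Y ^+ 2) by
  nra.
rewrite -subr_ge0; move: H2; rewrite pmulr_rge0 //.
Qed.

Definition fr m n (X : 'M[R]_(m, n)) := Num.sqrt (ip X X).

Lemma fr_ge0 m n (X : 'M[R]_(m, n)) : 0 <= fr X.
Proof. exact: sqrtr_ge0. Qed.

Lemma fr_sq m n (X : 'M[R]_(m, n)) : fr X ^+ 2 = ip X X.
Proof. by rewrite sqr_sqrtr // ip_ge0. Qed.

Lemma ip_le_fr m n (X Y : 'M[R]_(m, n)) : ip X Y <= fr X * fr Y.
Proof.
rewrite /fr -sqrtrM ?ip_ge0 //; apply: le_trans (ler_norm _) _.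
rewrite -sqrtr_sqr; apply: ler_wsqrtr; exact: ip_CS.
Qed.

Lemma fr_tri m n (X Y : 'M[R]_(m, n)) : fr (X + Y) <= fr X + fr Y.
Proof.
have H : ip (X + Y) (X + Y) <= (fr X + fr Y) ^+ 2.
  rewrite ipDl !ipDr -!fr_sq.
  have h1 := ip_le_fr X Y; have h2 := ip_le_fr Y X.
  nra.
apply: le_trans (ler_wsqrtr H) _.
by rewrite sqrtr_sqr ger0_norm // addr_ge0 ?fr_ge0.
Qed.

Lemma fr_N m n (X : 'M[R]_(m, n)) : fr (- X) = fr X.
Proof. by rewrite /fr ipNr ipC ipNr opprK. Qed.

Lemma fr_sub m n (X Y : 'M[R]_(m, n)) : fr (X - Y) <= fr X + fr Y.
Proof. by rewrite -(fr_N Y) fr_tri. Qed.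

Lemma fr_le m n p q (X : 'M[R]_(m, n)) (Y : 'M[R]_(p, q)) c : 0 <= c ->
  ip Y Y <= c ^+ 2 * ip X X -> fr Y <= c * fr X.
Proof.
move=> c0 H; rewrite /fr -(ger0_norm c0) -sqrtr_sqr -sqrtrM ?sqr_ge0 //.
exact: ler_wsqrtr.
Qed.

Lemma coerc m n (X Y : 'M[R]_(m, n)) c : 0 <= c ->
  c * ip X X <= ip X Y -> c * fr X <= fr Y.
Proof.
move=> c0 H.
have H1 : c * fr X * fr X <= fr Y * fr X.
  rewrite -mulrA -expr2 fr_sq [fr Y * _]mulrC; apply: le_trans H _; exact: ip_le_fr.
have [z|] := eqVneq (fr X) 0; first by rewrite z mulr0 fr_ge0.
move=> nz; have pos : 0 < fr X by rewrite lt_def nz fr_ge0.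
by rewrite -(ler_pM2r pos).
Qed.

Definition ray n (M : 'M[R]_n) a b := forall m (X : 'M[R]_(n, m)),
  a * ip X X <= ip X (M *m X) <= b * ip X X.

End IP.

Section Ray.
Variable R : rcfType.

Lemma ip0r m n (Z : 'M[R]_(m, n)) : ip Z 0 = 0.
Proof. by rewrite /ip big1 // => i _; rewrite big1 // => j _; rewrite mxE mulr0. Qed.

Lemma ip_sumr m n (X : 'M[R]_(m, n)) (I : finType) (F : I -> 'M[R]_(m, n)) :
  ip X (\sum_i F i) = \sum_i ip X (F i).
Proof. exact: (big_morph (ip X) (ipDr X) (ip0r X)). Qed.

Lemma polar n m (M : 'M[R]_n) (U V : 'M[R]_(n, m)) : M^T = M ->
  4%:R * ip U (M *m V) = ip (U + V) (M *m (U + V)) - ip (U - V) (M *m (U - V)).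
Proof.
move=> Ms; have e : ip V (M *m U) = ip U (M *m V).
  by rewrite ip_mull Ms ipC.
rewrite !mulmxDr !mulmxN !(ipDl, ipDr, ipBl, ipBr, ipNl, ipNr) e; ring.
Qed.

Lemma off_bnd n (M1 M2 E : 'M[R]_n) b : 0 < b -> M1^T = M1 -> M2^T = M2 ->
  ray M1 0 b -> ray M2 0 b -> E *+ 2 = M1 - M2 ->
  forall m (X : 'M[R]_(n, m)), ip (E *m X) (E *m X) <= b ^+ 2 * ip X X.
Proof.
move=> b0 s1 s2 r1 r2 hE m X.
set U := E *m X; set V := b *: X.
have h1 := polar U V s1; have h2 := polar U V s2.
have [q1' q1] := andP (r1 _ (U + V)); have [q2 q2'] := andP (r1 _ (U - V)).
have [q3 q3'] := andP (r2 _ (U + V)); have [q4' q4] := andP (r2 _ (U - V)).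
have eG : ip U (M1 *m V) - ip U (M2 *m V) = 2%:R * b * ip U U.
  rewrite -ipBr -mulmxBl -hE mulr2n mulmxDl /V -!scalemxAr ipDr !ipZr -/U; ring.
have eS : ip (U + V) (U + V) + ip (U - V) (U - V) = 2%:R * ip U U + 2%:R * ip V V.
  rewrite !(ipDl, ipDr, ipBl, ipBr, ipNl, ipNr) [ip V U]ipC; ring.
have eV : ip V V = b ^+ 2 * ip X X by rewrite /V ipZl ipZr; ring.
have u0 := ip_ge0 U; have x0 := ip_ge0 X.
rewrite mul0r in q2 q3.
have H : b * (3%:R * ip U U) <= b * (b ^+ 2 * ip X X).
  have eS' : b * ip (U + V) (U + V) + b * ip (U - V) (U - V) =
     2%:R * (b * ip U U) + 2%:R * (b * ip V V) by rewrite -mulrDr eS; ring.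
  rewrite -eV; lra.
rewrite ler_pM2l // in H; lra.
Qed.

End Ray.

Section Block.
Variable R : rcfType.

Lemma sign_ray n (M D : 'M[R]_n) a b : D^T = D -> D *m D = 1%:M ->
  ray M a b -> ray (D *m M *m D) a b.
Proof.
move=> DT DD r m X.
have e1 : ip X (D *m M *m D *m X) = ip (D *m X) (M *m (D *m X)).
  by rewrite -!mulmxA ip_mull DT.
have e2 : ip X X = ip (D *m X) (D *m X).
  by rewrite ip_mull DT mulmxA DD mul1mx.
by rewrite e1 e2; apply: r.
Qed.

Lemma block_ray n (M : 'M[R]_n) (e : 'I_n -> 'I_n -> bool) a b :
  (forall i, e i i) -> (forall i j, e i j -> e j i) ->
  (forall i j k, e i j -> e j k -> e i k) ->
  M^T = M -> ray M a b -> ray (\matrix_(i, j) (if e i j then M i j else 0)) a b.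
Proof.
move=> er es et Ms rM.
pose rep i := odflt i [pick j | e i j].
have erep : forall i, e i (rep i).
  move=> i; rewrite /rep; case: pickP => [j //|/(_ i)].
  by rewrite er.
have eq_rep : forall i j, e i j = (rep i == rep j).
  move=> i j; apply/idP/eqP.
    move=> eij; have -> : rep i = odflt i [pick k | e j k].
      by rewrite /rep; congr odflt; apply: eq_pick => k /=; apply/idP/idP;
        [apply: et; apply: es | apply: et].
    rewrite /rep; case: pickP => [//|/(_ j)]; by rewrite er.
  move=> h; apply: et (erep i) _; rewrite h; apply: es; exact: erep.
pose P r := diag_mx (\row_i ((rep i == r)%:R) : 'rV[R]_n).
have Bdef : \matrix_(i, j) (if e i j then M i j else 0) = \sum_r P r *m M *m P r.
  apply/matrixP => i j; rewrite summxE !mxE (bigD1 (rep i)) //= big1.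
    rewrite mul_mx_diag mul_diag_mx !mxE.
    have -> : (rep i == rep i) = true by apply/eqP.
    rewrite mul1r addr0 eq_rep [rep j == rep i]eq_sym.
    by case: (rep i == rep j); rewrite ?mulr1 ?mulr0.
  move=> k nk; rewrite mul_mx_diag mul_diag_mx !mxE.
  by rewrite eq_sym (negbTE nk) !mul0r.
have PT : forall r, (P r)^T = P r by move=> r; rewrite tr_diag_mx.
have PP : forall r, P r *m P r = P r.
  move=> r; apply/matrixP => i j; rewrite mul_diag_mx !mxE.
  by case: (rep i == r); rewrite ?mul1r ?mul0r ?mul0rn.
have Psum : \sum_r P r = 1%:M.
  apply/matrixP => i j; rewrite summxE /P [RHS]mxE.
  under eq_bigr do rewrite !mxE.
  rewrite sumrMnl (bigD1 (rep i)) //= big1.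
    by rewrite addr0; have -> : (rep i == rep i) = true by apply/eqP.
  by move=> k nk; rewrite eq_sym (negbTE nk).
move=> m X; rewrite Bdef mulmx_suml ip_sumr.
have e1 : forall r, ip X (P r *m M *m P r *m X) = ip (P r *m X) (M *m (P r *m X)).
  by move=> r; rewrite -!mulmxA ip_mull PT.
have e2 : ip X X = \sum_r ip (P r *m X) (P r *m X).
  rewrite -{2}(mul1mx X) -Psum mulmx_suml ip_sumr; apply: eq_bigr => k _.
  by rewrite -[in LHS]PP -mulmxA ip_mull PT.
rewrite (eq_bigr _ (fun k _ => e1 k)).
rewrite e2 !mulr_sumr; apply/andP; split; apply: ler_sum => k _;
  by have /andP[] := rM _ (P k *m X).
Qed.

End Block.

Section Main.
Variable R : rcfType.

Lemma frob_fr m n (X : 'M[R]_(m, n)) : frob X = fr X.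
Proof.
rewrite /frob /fr /ip; congr Num.sqrt;
try (apply: eq_bigr => i _; apply: eq_bigr => j _; rewrite expr2).
Qed.

Lemma fr_tr m n (X : 'M[R]_(m, n)) : fr X^T = fr X.
Proof. by rewrite /fr -ip_tr. Qed.

Lemma rep_ex n (e : 'I_n -> 'I_n -> bool) :
  (forall i, e i i) -> (forall i j, e i j -> e j i) ->
  (forall i j k, e i j -> e j k -> e i k) ->
  exists2 rep : 'I_n -> 'I_n, (forall i, e i (rep i)) &
     (forall i j, e i j -> rep i = rep j).
Proof.
move=> er es et.
exists (fun i => odflt i [pick j | e i j]).
  move=> i; case: pickP => [j //|/(_ i)]; by rewrite er.
move=> i j eij; have -> : [pick k | e i k] = [pick k | e j k].
  by apply: eq_pick => k /=; apply/idP/idP;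
     [apply: et; apply: es | apply: et].
case: pickP => [//|/(_ j)]; by rewrite er.
Qed.

Lemma sign_ex n l (s : nat -> 'I_n -> 'I_n -> bool) (A : 'M[R]_n) h :
  nested_partition l s -> (h < l)%N ->
  exists D : 'M[R]_n, [/\ D^T = D, D *m D = 1%:M &
    (blockpart s h A - blockpart s h.+1 A) *+ 2 =
      blockpart s h A - D *m blockpart s h A *m D].
Proof.
case=> Heq _ _ Hsplit hl.
have [er es et] := Heq h (ltnW hl).
have [er1 es1 et1] := Heq h.+1 hl.
have [sub _ three] := Hsplit h hl.
have [rep rr rE] := rep_ex er es et.
pose d := \row_i (if s h.+1 i (rep i) then 1 else -1 : R).
exists (diag_mx d); split.
- exact: tr_diag_mx.
- apply/matrixP => i j; rewrite mul_diag_mx !mxE.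
  by case: (s h.+1 i (rep i)); case: (i == j); rewrite /= ?mulr1 ?mulr0 ?mulrNN ?mulr1.
apply/matrixP => i j; rewrite mul_mx_diag mul_diag_mx !mxE.
case sij: (s h i j); last first.
  have -> : s h.+1 i j = false by apply/negP => /sub; rewrite sij.
  rewrite /=; ring.
have rij := rE _ _ sij.
have sir := rr i; have sjr := rr j; rewrite -rij in sjr.
case ei: (s h.+1 i (rep i)); case ej: (s h.+1 j (rep j)); rewrite -?rij in ej.
- have -> : s h.+1 i j by apply: et1 ei (es1 _ _ ej).
  rewrite /=; ring.
- have -> : s h.+1 i j = false.
    by apply/negP => hij; move: ej; rewrite (et1 _ _ _ (es1 _ _ hij) ei).
  rewrite /=; ring.
- have -> : s h.+1 i j = false.
    by apply/negP => hij; move: ei; rewrite (et1 _ _ _ hij ej).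
  rewrite /=; ring.
- have -> : s h.+1 i j.
    have := three _ _ _ (es _ _ sir) (es _ _ sjr).
    case/or3P => [h1|h1|//].
      by move: ei; rewrite (es1 _ _ h1).
    by move: ej; rewrite (es1 _ _ h1).
  rewrite /=; ring.
Qed.


Lemma level_sym n l (s : nat -> 'I_n -> 'I_n -> bool) (A : 'M[R]_n) h :
  nested_partition l s -> (h <= l)%N -> A^T = A ->
  (blockpart s h A)^T = blockpart s h A.
Proof.
case=> Heq _ _ _ hl As; have [er es et] := Heq h hl.
apply/matrixP => i j; rewrite !mxE.
have -> : s h j i = s h i j by apply/idP/idP; apply: es.
by rewrite -{1}As mxE.
Qed.

Lemma level_ray n l (s : nat -> 'I_n -> 'I_n -> bool) (A : 'M[R]_n) h a b :
  nested_partition l s -> (h <= l)%N -> A^T = A -> ray A a b ->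
  ray (blockpart s h A) a b.
Proof.
case=> Heq _ _ _ hl As rA; have [er es et] := Heq h hl.
exact: block_ray.
Qed.

Lemma level_E n l (s : nat -> 'I_n -> 'I_n -> bool) (A : 'M[R]_n) h b :
  nested_partition l s -> (h < l)%N -> A^T = A -> ray A 0 b -> 0 < b ->
  forall m (X : 'M[R]_(n, m)),
  ip ((blockpart s h A - blockpart s h.+1 A) *m X)
     ((blockpart s h A - blockpart s h.+1 A) *m X) <= b ^+ 2 * ip X X.
Proof.
move=> np hl As rA b0.
have [D [DT DD hE]] := sign_ex A np hl.
have Bs := level_sym np (ltnW hl) As.
have rB := level_ray np (ltnW hl) As rA.
apply: (off_bnd b0 Bs _ rB _ hE).
  by rewrite !trmx_mul DT Bs mulmxA.
exact: sign_ray.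
Qed.


Lemma pow_bnd (q : R) l : 0 <= q -> l%:R * q < 2%:R ->
  (1 + q) ^+ l.+1 - 1 <= (l.+1)%:R ^+ 2 * q.
Proof.
move=> q0 hl.
suff H : forall k, (k <= l.+1)%N -> (1 + q) ^+ k <= 1 + k%:R ^+ 2 * q.
  by have := H _ (leqnn _); lra.
elim=> [|k IH] hk.
  by rewrite expr0 -[X in X <= _]addr0 lerD2l mulr_ge0 ?sqr_ge0.
have IH' := IH (ltnW hk).
have kl : k%:R * q <= l%:R * q by apply: ler_wpM2r => //; rewrite ler_nat.
have xq0 : 0 <= k%:R * q by rewrite mulr_ge0 ?ler0n.
have hint : 0 <= (k%:R * q) * (2%:R - k%:R * q) by rewrite mulr_ge0 //; lra.
have q1 : 0 <= 1 + q by lra.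
have := ler_wpM2l q1 IH'; rewrite -exprS => h1.
apply: le_trans h1 _; rewrite -natr1.
move: xq0 hint kl; set x : R := k%:R => xq0 hint kl.
nra.
Qed.

End Main.

Lemma bp0 (R : rcfType) n l (s : nat -> 'I_n -> 'I_n -> bool) (A : 'M[R]_n) :
  nested_partition l s -> blockpart s 0 A = A.
Proof. by case=> _ H0 _ _; apply/matrixP => i j; rewrite mxE H0. Qed.

Theorem lemma3p2 (R : rcfType) (n1 n2 l : nat)
  (s1 : nat -> 'I_n1 -> 'I_n1 -> bool) (s2 : nat -> 'I_n2 -> 'I_n2 -> bool)
  (A1 : 'M[R]_n1) (A2 : 'M[R]_n2) (al1 be1 al2 be2 eps : R)
  (B Xl : 'M[R]_(n1, n2)) (dX : nat -> 'M[R]_(n1, n2)) :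
  nested_partition l s1 -> nested_partition l s2 ->
  spd A1 -> spd A2 -> 0 < al1 -> 0 < al2 ->
  spectrum_in A1 al1 be1 -> spectrum_in A2 al2 be2 ->
  0 <= eps ->
  frob (Rl l s1 s2 A1 A2 Xl - B) <= eps * frob B ->
  (forall h, (h < l)%N ->
     frob (Rh l s1 s2 A1 A2 Xl dX h) <= eps * frob (Xi l s1 s2 A1 A2 Xl dX h)) ->
  let kappa := (be1 + be2) / (al1 + al2) in
  l%:R * (kappa * eps) < 2 ->
  frob (A1 *m Xt l Xl dX 0 + Xt l Xl dX 0 *m A2 - B)
    <= ((l.+1)%:R ^+ 2) * kappa * eps * frob B.
Proof.
move=> np1 np2 [A1s _] [A2s _] a1 a2 sp1 sp2 e0 HRl HRh kappa Hk.
have HRh' : forall h, (h < l)%N ->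
    fr (Rh l s1 s2 A1 A2 Xl dX h) <= eps * fr (Xi l s1 s2 A1 A2 Xl dX h).
  by move=> h hl; rewrite -!frob_fr; apply: HRh.
rewrite !frob_fr in HRl *.
have [n1z|n1p] := posnP n1.
  have z : forall X : 'M[R]_(n1, n2), fr X = 0.
    move=> X; rewrite /fr /ip big1 ?sqrtr0 // => -[i hi]; exfalso; by move: hi; rewrite n1z.
  by rewrite !z mulr0.
have [n2z|n2p] := posnP n2.
  have z : forall X : 'M[R]_(n1, n2), fr X = 0.
    move=> X; rewrite /fr /ip big1 ?sqrtr0 // => i _; rewrite big1 // => -[j hj].
    exfalso; by move: hj; rewrite n2z.
  by rewrite !z mulr0.
have r1 : ray A1 al1 be1 := ray_spec A1s sp1.
have r2 : ray A2 al2 be2 := ray_spec A2s sp2.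
have ab : forall n (A : 'M[R]_n) a b, (0 < n)%N -> ray A a b -> a <= b.
  move=> n A a b np rA; pose X := const_mx 1 : 'M[R]_(n, 1).
  have pX : 0 < ip X X.
    rewrite lt_def ip_ge0 andbT; apply/eqP => /ip_eq0/matrixP/(_ (Ordinal np) 0).
    by rewrite !mxE; apply/eqP; exact: oner_neq0.
  have /andP[h1 h2] := rA _ X; have := le_trans h1 h2; by rewrite ler_pM2r.
have ab1 := ab _ _ _ _ n1p r1; have ab2 := ab _ _ _ _ n2p r2.
have b1 : 0 < be1 by apply: lt_le_trans ab1.
have b2 : 0 < be2 by apply: lt_le_trans ab2.
have S0 : 0 < al1 + al2 by apply: addr_gt0.
have k1 : 1 <= kappa by rewrite /kappa ler_pdivlMr // mul1r; apply: lerD.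
set q := kappa * eps.
have q0 : 0 <= q by rewrite mulr_ge0 //; lra.
have weak : forall n (A : 'M[R]_n) a b, 0 <= a -> ray A a b -> ray A 0 b.
  move=> n A a b a0 rA m X; have /andP[h h'] := rA _ X.
  rewrite mul0r h' andbT; apply: le_trans h; by rewrite mulr_ge0 ?ip_ge0.
have r1' := weak _ _ _ _ (ltW a1) r1; have r2' := weak _ _ _ _ (ltW a2) r2.
pose L h (X : 'M[R]_(n1, n2)) := blockpart s1 h A1 *m X + X *m blockpart s2 h A2.
have coer : forall h, (h <= l)%N -> forall X, (al1 + al2) * fr X <= fr (L h X).
  move=> h hl X; apply: coerc; first exact: ltW.
  rewrite /L ipDr mulrDl; apply: lerD.
    by have /andP[] := level_ray np1 hl A1s r1 X.
  have /andP[hh _] := level_ray np2 hl A2s r2 X^T.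
  rewrite -(ip_tr X X) in hh.
  by rewrite (ip_tr X (X *m _)) trmx_mul (level_sym np2 hl A2s).
have Xib : forall h, (h < l)%N ->
    fr (Xi l s1 s2 A1 A2 Xl dX h) <= (be1 + be2) * fr (Xt l Xl dX h.+1).
  move=> h hl; rewrite /Xi; set Y := Xt l Xl dX h.+1.
  apply: le_trans (fr_sub _ _) _; rewrite fr_N mulrDl; apply: lerD.
    by apply: fr_le (ltW b1) _; exact: (level_E np1 hl A1s r1' b1).
  rewrite -fr_tr trmx_mul linearB /= (level_sym np2 (ltnW hl) A2s) (level_sym np2 hl A2s).
  rewrite -(fr_tr Y); apply: fr_le (ltW b2) _; exact: (level_E np2 hl A2s r2' b2).
have rec : forall h, (h < l)%N ->
    L h (Xt l Xl dX h) - B = (L h.+1 (Xt l Xl dX h.+1) - B) + Rh l s1 s2 A1 A2 Xl dX h.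
  move=> h hl.
  have -> : Xt l Xl dX h = Xt l Xl dX h.+1 + dX h.
    by rewrite /Xt big_ltn // [dX h + _]addrC addrA.
  rewrite /Rh /Xi /L; set Y := Xt l Xl dX h.+1.
  rewrite ?mulmxDr ?mulmxDl ?mulmxN ?mulNmx ?mulmxBl ?mulmxBr.
  apply/matrixP => i j; rewrite !mxE; ring.
have base : L l (Xt l Xl dX l) - B = Rl l s1 s2 A1 A2 Xl - B.
  by rewrite /Xt big_geq // addr0.
pose r h := fr (L h (Xt l Xl dX h) - B).
have step : forall h, (h < l)%N -> r h <= r h.+1 + q * (r h.+1 + fr B).
  move=> h hl; rewrite /r (rec h hl); apply: le_trans (fr_tri _ _) _.
  apply: lerD => //; apply: le_trans (HRh' h hl) _.
  set Y := Xt l Xl dX h.+1.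
  have hx := Xib h hl; have hc := coer h.+1 hl Y.
  have hb : fr (L h.+1 Y) <= fr (L h.+1 Y - B) + fr B.
    by rewrite -{1}(subrK B (L h.+1 Y)); apply: fr_tri.
  have hy : (be1 + be2) * fr Y <= kappa * (fr (L h.+1 Y - B) + fr B).
    have -> : (be1 + be2) * fr Y = kappa * ((al1 + al2) * fr Y).
      by rewrite /kappa; field; rewrite gt_eqF.
    apply: ler_wpM2l; first lra.
    exact: le_trans hc hb.
  apply: le_trans (ler_wpM2l e0 hx) _.
  apply: le_trans (ler_wpM2l e0 hy) _.
  by rewrite /q le_eqVlt; apply/orP; left; apply/eqP; ring.
have ind : forall k, (k <= l)%N -> r (l - k)%N <= ((1 + q) ^+ k.+1 - 1) * fr B.
  elim=> [|k IH] hk.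
    rewrite subn0 /r base expr1.
    have fB := fr_ge0 B.
    have : eps * fr B <= q * fr B by apply: ler_wpM2r => //; rewrite /q; nra.
    lra.
  have hlk : (l - k.+1 < l)%N by rewrite ltn_subrL /=; apply: leq_ltn_trans (leq0n k) hk.
  have := step _ hlk; rewrite subnSK // => st.
  have IH' := IH (ltnW hk).
  have q1 : 0 <= 1 + q by lra.
  have h3 := ler_wpM2l q1 IH'.
  rewrite [(1 + q) ^+ k.+2]exprS.
  move: st h3; set P := (1 + q) ^+ k.+1; set rr := r (l - k)%N.
  have fB := fr_ge0 B.
  nra.
have fin := ind l (leqnn l); rewrite subnn in fin.
have pb := pow_bnd q0 Hk.
have fB := fr_ge0 B.
have e : A1 *m Xt l Xl dX 0 + Xt l Xl dX 0 *m A2 - B = L 0 (Xt l Xl dX 0) - B.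
  by rewrite /L (bp0 A1 np1) (bp0 A2 np2).
rewrite e; apply: le_trans fin _.
have -> : (l.+1)%:R ^+ 2 * kappa * eps * fr B = ((l.+1)%:R ^+ 2 * q) * fr B.
  by rewrite /q; ring.
exact: ler_wpM2r.
Qed.
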